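(* Suppose Assumptions 1 and 2 (stated in the context) hold, and let $\mu^*$ be an equilibrium sorting such that for every $x_1\in I_{x_1}$ there exists $x_2^*(x_1)$ with $\mu^*_1(x_1,x_2^*(x_1))=x_1$. Then the equilibrium payoff function $u^*$ and wage function $w^*$ are $$u^*(\mathbf{x})=\tfrac12F(x_1,x_1)+\int_{x_2^*(x_1)}^{x_2}(s-x_2)(1+2s)^{-1}\,\mathrm{d}F(x_1,\mu^*_1(x_1,s)),$$ $$w^*(\mathbf{x})=\tfrac12F(x_1,x_1)+\int_{x_2^*(x_1)}^{x_2}s(1+2s)^{-1}\,\mathrm{d}F(x_1,\mu^*_1(x_1,s)),$$ for $\mathbf{x}=(x_1,x_2)$, where the integrals are Stieltjes integrals in $s$.
   Context: Model. A continuum of workers has types $\mathbf{x}=(x_1,x_2)\in I_{\mathbf{x}}=I_{x_1}\times I_{x_2}$ ($I_{x_1},I_{x_2}\subset\mathbb{R}$ closed), $x_1$ skill, $x_2$ strength of relative concerns, $\min I_{x_2}>-1/2$; types $\sim H$ with full support, marginals $H_{x_1},H_{x_2}$, $\Pr(X_2\le x_2\mid X_1=x_1)$ absolutely continuous in $x_2$. Teams of two with skills $x_1^k,x_1^j$ produce $F(x_1^k,x_1^j)$ ($F$ symmetric, increasing, twice continuously differentiable), split into wages $w^k+w^j=F(x_1^k,x_1^j)$. Utility of worker $\mathbf{x}^k$: $U(w^k,w^j;x_2^k)=w^k+x_2^k(w^k-w^j)$; outside options strictly below $F(x_1,x_1)/2$. Frontier $\psi(\mathbf{x}^j,\mathbf{x}^k,u)=\max_{w^j}U(F(x_1^k,x_1^j)-w^j,w^j;x_2^k)$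 s.t. $U(w^j,F(x_1^k,x_1^j)-w^j;x_2^j)\ge u$. A sorting is $\mu=(\mu_1,\mu_2):I_{\mathbf{x}}\to I_{\mathbf{x}}$ with $\mu(\mu(\mathbf{x}))=\mathbf{x}$, feasible if $\mu(\mathbf{X})\sim H$; individually rational given payoffs $u$ if $\mu(\mathbf{x}^k)=\mathbf{x}^j\Rightarrow\mathbf{x}^j\in\arg\max_{\mathbf{x}}\psi(\mathbf{x}^k,\mathbf{x},u(\mathbf{x}))$. A competitive equilibrium $(\mu^*,u^* )$: $\mu^*$ feasible and individually rational given $u^*$, and $u^*(\mathbf{x}^k)=\max_{\mathbf{x}^j}\psi(\mathbf{x}^j,\mathbf{x}^k,u^*(\mathbf{x}^j))$. The equilibrium wage $w^*(\mathbf{x})$ is defined by $u^*(\mathbf{x})=(1+2x_2)w^*(\mathbf{x})-x_2F(x_1,\mu^*_1(\mathbf{x}))$ (co-workers' wages sum to output). Assumption 1: With $L(\mathbf{x}^k;x_1',x_1)=(F(x_1^k,x_1')-F(x_1^k,x_1))(1+2x_2^k)^{-1}$ and $V(l;x_1',x_1)=\Pr(L(\mathbf{X};x_1',x_1)\le l)$, for all $x_1'''>x_1''$, $x_1'>x_1$ and all $\mathbf{x}^k$: $V(L(\mathbf{x}^k;x_1''',x_1'');x_1''',x_1'')=V(L(\mathbf{x}^k;x_1',x_1);x_1',x_1)=:v_1(\mathbf{x}^k)$. Assumption 2: there is an exchangeable copula $C$ ($C(u,v)=C(v,u)$) of $(X_1,v_1(\mathbf{X}))$, where a copula of $(Y_1,Y_2)$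 is a supermodular $C:[0,1]^2\to[0,1]$ with uniform margins and $C(\Pr(Y_1\le y_1),\Pr(Y_2\le y_2))=\Pr(Y_1\le y_1,Y_2\le y_2)$. *)

(* Defs.v *)
From HB Require Import structures.
From mathcomp Require Import all_boot all_order all_algebra.
From mathcomp Require Import all_classical all_reals all_analysis.
Set Implicit Arguments. Unset Strict Implicit. Unset Printing Implicit Defensive.
Import Order.TTheory GRing.Theory Num.Theory.
Import numFieldNormedType.Exports.
Local Open Scope classical_set_scope.
Local Open Scope ring_scope.

Section Model.
Variable R : realType.

Definition closed_interval (I : set R) : Prop :=
  closed I /\ I !=set0 /\ (forall x y z, I x -> I z -> x <= y <= z -> I y).

Definition U (wk wj x2 : R) : R := wk + x2 * (wk - wj).

(** frontier psi(x^j, x^k, u) = max_{w^j} U(F - w^j, w^j; x_2^k)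
    s.t. U(w^j, F - w^j; x_2^j) >= u *)
Definition frontier (F : R -> R -> R) (xj xk : R * R) (u : R) : R :=
  sup [set U (F xk.1 xj.1 - wj) wj xk.2 |
        wj in [set wj | u <= U wj (F xk.1 xj.1 - wj) xj.2]].

Definition sorting (I : set (R * R)) (mu : R * R -> R * R) : Prop :=
  (forall x, I x -> I (mu x)) /\ (forall x, I x -> mu (mu x) = x).

Definition feasible (H : probability (R * R)%type R) (mu : R * R -> R * R) :
  Prop :=
  measurable_fun setT mu /\
  forall A : set (R * R), measurable A -> H (mu @^-1` A) = H A.

Definition individually_rational (I : set (R * R)) (F : R -> R -> R)
  (mu : R * R -> R * R) (u : R * R -> R) : Prop :=
  forall xk xj, I xk -> mu xk = xj ->
    I xj /\ forall x, I x -> frontier F x xk (u x) <= frontier F xj xk (u xj).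

Definition competitive_equilibrium (H : probability (R * R)%type R)
  (I : set (R * R)) (F : R -> R -> R) (mu : R * R -> R * R) (u : R * R -> R)
  : Prop :=
  [/\ sorting I mu, feasible H mu, individually_rational I F mu u &
      forall xk, I xk ->
        (forall xj, I xj -> frontier F xj xk (u xj) <= u xk) /\
        exists2 xj, I xj & frontier F xj xk (u xj) = u xk].

Definition full_support (H : probability (R * R)%type R) (I : set (R * R)) :
  Prop :=
  H (~` I) = 0%E /\
  forall x, I x -> forall O : set (R * R), open O -> O x -> (0 < H O)%E.

Definition abs_continuous_fun (f : R -> R) : Prop :=
  forall e : R, 0 < e -> exists2 d : R, 0 < d &
    forall (n : nat) (a b : nat -> R),
      (forall i, (i < n)%N -> a i <= b i) ->
      (forall i j, (i < n)%N -> (j < n)%N -> i <> j -> b i <= a j \/ b j <= a i) ->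
      \sum_(i < n) (b i - a i) < d ->
      \sum_(i < n) `|f (b i) - f (a i)| < e.

(** Pr(X_2 <= x_2 | X_1 = x_1) is absolutely continuous in x_2 (for a
    version K of the regular conditional distribution of X_2 given X_1) *)
Definition cond_cdf_abs_continuous (H : probability (R * R)%type R)
  (I1 : set R) : Prop :=
  exists K : R.-pker R ~> R,
    (forall (A B : set R), measurable A -> measurable B ->
       H (A `*` B) = (\int[H]_(x in A `*` setT) K x.1 B)%E) /\
    (forall x1, I1 x1 -> abs_continuous_fun (fun x2 => fine (K x1 [set y | y <= x2]))).

Definition d1 (F : R -> R -> R) : R -> R -> R :=
  fun x y => derive1 (fun t => F t y) x.
Definition d2 (F : R -> R -> R) : R -> R -> R :=
  fun x y => derive1 (fun t => F x t) y.
Definition C1 (F : R -> R -> R) : Prop :=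
  (forall x y, derivable (fun t => F t y) x 1 /\ derivable (fun t => F x t) y 1) /\
  continuous (fun p : R * R => F p.1 p.2) /\
  continuous (fun p : R * R => d1 F p.1 p.2) /\
  continuous (fun p : R * R => d2 F p.1 p.2).
Definition C2 (F : R -> R -> R) : Prop := [/\ C1 F, C1 (d1 F) & C1 (d2 F)].

Definition symmetric_prod (F : R -> R -> R) : Prop := forall a b, F a b = F b a.
Definition increasing_prod (F : R -> R -> R) : Prop :=
  forall a b c, a < b -> F a c < F b c /\ F c a < F c b.

Definition Lfun (F : R -> R -> R) (xk : R * R) (a' a : R) : R :=
  (F xk.1 a' - F xk.1 a) / (1 + 2 * xk.2).
Definition Vfun (H : probability (R * R)%type R) (F : R -> R -> R)
  (l a' a : R) : R := fine (H [set x | Lfun F x a' a <= l]).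

Definition assumption1 (H : probability (R * R)%type R) (I1 I2 : set R)
  (F : R -> R -> R) : Prop :=
  forall a a' b b', I1 a -> I1 a' -> I1 b -> I1 b' -> a < a' -> b < b' ->
  forall xk, (I1 `*` I2) xk ->
    Vfun H F (Lfun F xk b' b) b' b = Vfun H F (Lfun F xk a' a) a' a.

Definition copula (C : R -> R -> R) : Prop :=
  [/\ (forall u v, 0 <= u <= 1 -> 0 <= v <= 1 -> 0 <= C u v <= 1),
      (forall u u' v v', 0 <= u -> u <= u' -> u' <= 1 -> 0 <= v -> v <= v' ->
         v' <= 1 -> C u' v + C u v' <= C u' v' + C u v) &
      (forall u, 0 <= u <= 1 -> C u 1 = u /\ C 1 u = u)].

(** Assumption 2 (v1 is the common value from Assumption 1) *)
Definition assumption2 (H : probability (R * R)%type R) (I1 I2 : set R)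
  (F : R -> R -> R) : Prop :=
  exists v1 : R * R -> R,
    (forall x a a', (I1 `*` I2) x -> I1 a -> I1 a' -> a < a' ->
       v1 x = Vfun H F (Lfun F x a' a) a' a) /\
    exists C : R -> R -> R,
      [/\ copula C, (forall u v, C u v = C v u) &
        forall y1 y2 : R,
          C (fine (H [set x | x.1 <= y1])) (fine (H [set x | v1 x <= y2]))
          = fine (H [set x | x.1 <= y1 /\ v1 x <= y2])].

(** Riemann--Stieltjes integral  int_a^b g(s) dG(s)  (oriented) *)
Definition RS_sum (g G : R -> R) (n : nat) (t xi : nat -> R) : R :=
  \sum_(i < n) g (xi i) * (G (t i.+1) - G (t i)).
Definition tagged_partition (a b : R) (n : nat) (t xi : nat -> R) : Prop :=
  [/\ t 0%N = a, t n = b & forall i, (i < n)%N -> t i <= xi i <= t i.+1].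
Definition RS_integral_on (g G : R -> R) (a b v : R) : Prop :=
  forall e : R, 0 < e -> exists2 d : R, 0 < d &
    forall n t xi, tagged_partition a b n t xi ->
      (forall i, (i < n)%N -> t i.+1 - t i < d) ->
      `|RS_sum g G n t xi - v| < e.
Definition is_RS_integral (g G : R -> R) (a b v : R) : Prop :=
  if a <= b then RS_integral_on g G a b v else RS_integral_on g G b a (- v).

End Model.

(* Main.v *)
Require Import Defs.
From HB Require Import structures.
From mathcomp Require Import all_boot all_order all_algebra.
From mathcomp Require Import all_classical all_reals all_analysis.
From mathcomp Require Import ring lra.
Import Order.TTheory GRing.Theory Num.Theory.
Import numFieldNormedType.Exports.
Local Open Scope classical_set_scope.
Local Open Scope ring_scope.

Lemma frontierE (R : realType) (F : R -> R -> R) (xj xk : R * R) (v : R) :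
  0 < 1 + 2 * xj.2 -> 0 < 1 + 2 * xk.2 ->
  frontier F xj xk v = (1 + xk.2) * F xk.1 xj.1
     - (1 + 2 * xk.2) * ((v + xj.2 * F xk.1 xj.1) / (1 + 2 * xj.2)).
Proof.
move=> hj hk; rewrite /frontier.
set a := F xk.1 xj.1.
set phi := (v + xj.2 * a) / (1 + 2 * xj.2).
have hphi : v <= U phi (a - phi) xj.2.
  rewrite /U /phi; apply: le_trans (lexx _) _.
  have hj0 : 1 + 2 * xj.2 != 0 by rewrite gt_eqF.
  have -> : (v + xj.2 * a) / (1 + 2 * xj.2) + xj.2 *
     ((v + xj.2 * a) / (1 + 2 * xj.2) - (a - (v + xj.2 * a) / (1 + 2 * xj.2))) = v.
    by field.
  by [].
have ub : forall y, [set U (a - wj) wj xk.2 | wj in [set wj | v <= U wj (a - wj) xj.2]] y ->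
   y <= (1 + xk.2) * a - (1 + 2 * xk.2) * phi.
  move=> y [wj /= hw <-]; rewrite /U.
  have : phi <= wj.
    rewrite /phi ler_pdivrMr //.
    move: hw; rewrite /U; nra.
  nra.
apply/le_anti/andP; split.
  apply: ge_sup; first by exists (U (a - phi) phi xk.2), phi.
  by move=> y /ub.
have -> : (1 + xk.2) * a - (1 + 2 * xk.2) * phi = U (a - phi) phi xk.2.
  by rewrite /U; ring.
apply: ub_le_sup; last by exists phi.
by exists ((1 + xk.2) * a - (1 + 2 * xk.2) * phi) => y /ub.
Qed.

Lemma part_mono (R : realType) (n : nat) (t : nat -> R) :
  (forall i, (i < n)%N -> t i <= t i.+1) ->
  forall i j, (i <= j)%N -> (j <= n)%N -> t i <= t j.
Proof.
move=> h i j ij; elim: j ij => [|j IH].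
  by rewrite leqn0 => /eqP ->.
rewrite leq_eqVlt => /orP [/eqP -> //|]; rewrite ltnS => ij jn.
by apply: le_trans (IH ij (ltnW jn)) (h _ jn).
Qed.

Lemma RS_main (R : realType) (J : set R) (m c al be : R)
  (u B G g : R -> R) :
  (forall x y z, J x -> J z -> x <= y <= z -> J y) ->
  (forall s, J s -> m <= s) -> 0 < 1 + 2 * m -> J al -> J be -> al <= be ->
  (forall s r, J s -> J r -> u s + (r - s) * B s <= u r) ->
  (forall s, J s -> G s = 2 * u s - (1 + 2 * s) * B s) ->
  (forall s, g s = (s - c) / (1 + 2 * s)) ->
  RS_integral_on g G al be
    ((u be - (be - c) * B be) - (u al - (al - c) * B al)).
Proof.
move=> Jc Jm m0 Jal Jbe albe sub HG Hg.
pose Psi s := u s - (s - c) * B s.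
have Bmono : forall p q, J p -> J q -> p <= q -> 0 <= B q - B p.
  move=> p q Jp Jq pq; have h1 := sub p q Jp Jq; have h2 := sub q p Jq Jp.
  rewrite le_eqVlt in pq; case/orP: pq => [/eqP -> | pq]; first by rewrite subrr.
  nra.
set K := `|1 + 2 * c| / (1 + 2 * m).
set V := B be - B al.
have V0 : 0 <= V by apply: Bmono.
have K0 : 0 <= K by rewrite /K divr_ge0 // ltW.
move=> e e0.
exists (e / (K * V + 1)).
  by rewrite divr_gt0 // ltr_pwDr // mulr_ge0.
move=> n t xi [t0 tn txi] mesh.
have tmono : forall i, (i < n)%N -> t i <= t i.+1.
  by move=> i /txi /andP [h1 h2]; apply: le_trans h1 h2.
have tin : forall i, (i <= n)%N -> J (t i).
  move=> i hi; apply: (Jc al (t i) be Jal Jbe); apply/andP; split.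
    by rewrite -t0; apply: (@part_mono _ n t tmono).
  by rewrite -tn; apply: (@part_mono _ n t tmono).
set d := e / (K * V + 1).
have piece : forall i, (i < n)%N ->
   `|g (xi i) * (G (t i.+1) - G (t i)) - (Psi (t i.+1) - Psi (t i))|
     <= K * d * (B (t i.+1) - B (t i)).
  move=> i hi.
  have Jp := tin i (ltnW hi); have Jq := tin i.+1 hi.
  have /andP [pxi xiq] := txi i hi.
  have mxi : m <= xi i by apply: le_trans (Jm _ Jp) pxi.
  have xi0 : 0 < 1 + 2 * xi i by nra.
  have md := mesh i hi.
  move: (t i) (t i.+1) Jp Jq pxi xiq md => p q Jp Jq pxi xiq md.
  have h1 := sub p q Jp Jq; have h2 := sub q p Jq Jp.
  have Bpq := Bmono p q Jp Jq (le_trans pxi xiq).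
  set D := (q - xi i) * B q + (xi i - p) * B p - (u q - u p).
  have -> : g (xi i) * (G q - G p) - (Psi q - Psi p)
      = (1 + 2 * c) / (1 + 2 * xi i) * D.
    rewrite Hg !HG // /Psi /D; field; by rewrite gt_eqF.
  have hD : `|D| <= (q - p) * (B q - B p).
    rewrite ler_norml; apply/andP; split; rewrite /D; nra.
  rewrite normrM.
  have hk : `|(1 + 2 * c) / (1 + 2 * xi i)| <= K.
    rewrite normrM normfV (gtr0_norm xi0) /K; apply: ler_wpM2l; first exact: normr_ge0.
    rewrite lef_pV2 ?posrE //; nra.
  apply: le_trans (ler_pM (normr_ge0 _) (normr_ge0 _) hk hD) _.
  rewrite -mulrA; apply: ler_wpM2l => //; apply: ler_wpM2r => //; exact: ltW.
change (`|RS_sum g G n t xi - (Psi be - Psi al)| < e).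
have tel : forall f : nat -> R, \sum_(i < n) (f i.+1 - f i) = f n - f 0%N.
  by move=> f; rewrite -(big_mkord xpredT (fun i => f i.+1 - f i)) telescope_sumr.
rewrite -t0 -tn -(tel (fun i => Psi (t i))) /RS_sum -sumrB.
apply: le_lt_trans (ler_norm_sum _ _ _) _.
apply: (@le_lt_trans _ _ (\sum_(i < n) (K * d * (B (t i.+1) - B (t i))))).
  by apply: ler_sum => i _; apply: piece.
rewrite -mulr_sumr (tel (fun i => B (t i))) t0 tn -/V.
have -> : K * d * V = e * (K * V / (K * V + 1)).
  rewrite /d; field; apply: lt0r_neq0; rewrite ltr_pwDr // mulr_ge0 //.
rewrite gtr_pMr // ltr_pdivrMr ?mul1r ?ltrDl //.
by rewrite ltr_pwDr // mulr_ge0.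
Qed.

Theorem proposition3 (R : realType) (I1 I2 : set R)
  (H : probability (R * R)%type R) (F : R -> R -> R) (o : R * R -> R)
  (mu : R * R -> R * R) (u w : R * R -> R) (x2star : R -> R) :
  closed_interval I1 -> closed_interval I2 ->
  (exists m, [/\ I2 m, -(1/2) < m & forall y, I2 y -> m <= y]) ->
  full_support H (I1 `*` I2) ->
  cond_cdf_abs_continuous H I1 ->
  symmetric_prod F -> increasing_prod F -> C2 F ->
  (forall x, (I1 `*` I2) x -> o x < F x.1 x.1 / 2) ->
  assumption1 H I1 I2 F ->
  assumption2 H I1 I2 F ->
  competitive_equilibrium H (I1 `*` I2) F mu u ->
  (forall x1, I1 x1 -> I2 (x2star x1) /\ (mu (x1, x2star x1)).1 = x1) ->
  (forall x, (I1 `*` I2) x -> u x = (1 + 2 * x.2) * w x - x.2 * F x.1 (mu x).1) ->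
  forall x, (I1 `*` I2) x ->
    (exists v, is_RS_integral (fun s => (s - x.2) / (1 + 2 * s))
                 (fun s => F x.1 (mu (x.1, s)).1) (x2star x.1) x.2 v /\
               u x = F x.1 x.1 / 2 + v) /\
    (exists v, is_RS_integral (fun s => s / (1 + 2 * s))
                 (fun s => F x.1 (mu (x.1, s)).1) (x2star x.1) x.2 v /\
               w x = F x.1 x.1 / 2 + v).

Proof.
move=> cI1 [_ [_ cI2]] [m [I2m mgt mmin]] _ _ _ _ _ _ _ _ [[sortI _] _ IR EQ] hx2s uw
  [x1 x2] [/= I1x1 I2x2].
have m0 : 0 < 1 + 2 * m by lra.
have pos : forall y, I2 y -> 0 < 1 + 2 * y by move=> y /mmin; lra.
have peq : forall xk, (I1 `*` I2) xk -> u xk = frontier F (mu xk) xk (u (mu xk)).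
  move=> xk Ik; have [ub [xj Ij fj]] := EQ xk Ik.
  have [Imu IRk] := IR xk (mu xk) Ik erefl.
  apply/le_anti/andP; split; last exact: ub.
  by rewrite -fj; apply: IRk.
pose B s := 2 * w (x1, s) - F x1 (mu (x1, s)).1.
have sub : forall s r, I2 s -> I2 r -> u (x1, s) + (r - s) * B s <= u (x1, r).
  move=> s r Is Ir.
  have Ik : (I1 `*` I2) (x1, s) by [].
  have Ij := sortI _ Ik.
  have Ijr := (EQ (x1, r) (conj I1x1 Ir)).1 _ Ij.
  have hs := peq _ Ik.
  have hw := uw _ Ik.
  move: Ijr hs hw; rewrite /B.
  case: Ij; case: (mu (x1, s)) => j1 j2 /= Ij1 Ij2.
  rewrite !frontierE /= ?pos //.
  set a := F x1 j1; set phi := (u (j1, j2) + j2 * a) / (1 + 2 * j2).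
  move=> h1 h2 h3.
  have ps := pos _ Is.
  have wphi : w (x1, s) = a - phi.
    apply: (mulfI (lt0r_neq0 ps)); rewrite mulrBr; lra.
  rewrite wphi; move: h1; rewrite h2; nra.
have [I2a0 mu0] := hx2s _ I1x1.
move: (x2star x1) I2a0 mu0 => a0 I2a0 mu0.
set A := F x1 x1.
have Ik0 : (I1 `*` I2) (x1, a0) by [].
have Ij0 := sortI _ Ik0.
have self0 := (EQ _ Ik0).1 _ Ik0.
have selfj := (EQ _ Ij0).1 _ Ij0.
have pk := peq _ Ik0.
have hw0 := uw _ Ik0.
have [ua0 Ba0] : u (x1, a0) = A / 2 /\ B a0 = 0.
  move: self0 selfj pk hw0; rewrite /B mu0 -/A.
  case: Ij0; move: mu0; case: (mu (x1, a0)) => j1 j2 /= -> _ Ij2.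
  rewrite !frontierE /= ?pos // -/A.
  have pa := pos _ I2a0; have pj := pos _ Ij2.
  set phk := (u (x1, a0) + a0 * A) / (1 + 2 * a0).
  set phj := (u (x1, j2) + j2 * A) / (1 + 2 * j2).
  have ek : u (x1, a0) = (1 + 2 * a0) * phk - a0 * A.
    by rewrite /phk; field; apply: lt0r_neq0.
  have ej : u (x1, j2) = (1 + 2 * j2) * phj - j2 * A.
    by rewrite /phj; field; apply: lt0r_neq0.
  move=> h1 h2 h3 h4.
  have e1 : phk + phj = A.
    apply: (mulfI (lt0r_neq0 pa)); rewrite mulrDr; lra.
  have g1 : A <= 2 * phk.
    have : 0 <= (1 + 2 * a0) * (2 * phk - A) by nra.
    by rewrite pmulr_rge0 // subr_ge0.
  have g2 : A <= 2 * phj.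
    have : 0 <= (1 + 2 * j2) * (2 * phj - A) by nra.
    by rewrite pmulr_rge0 // subr_ge0.
  have hk : phk = A / 2 by lra.
  have wk : w (x1, a0) = A / 2.
    apply: (mulfI (lt0r_neq0 pa)); rewrite -hk; lra.
  split; first by rewrite ek hk; field.
  by rewrite wk; lra.
have HG : forall s, I2 s -> F x1 (mu (x1, s)).1 = 2 * u (x1, s) - (1 + 2 * s) * B s.
  by move=> s Is; rewrite /B (uw (x1, s)) //=; ring.
have gen : forall c (g : R -> R), (forall s, g s = (s - c) / (1 + 2 * s)) ->
    is_RS_integral g (fun s => F x1 (mu (x1, s)).1) a0 x2
      ((u (x1, x2) - (x2 - c) * B x2) - (u (x1, a0) - (a0 - c) * B a0)).
  move=> c g Hg; rewrite /is_RS_integral; case: ifP => hle.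
    exact: (@RS_main _ I2 m c a0 x2 (fun s => u (x1, s)) B (fun s => F x1 (mu (x1, s)).1) g cI2 mmin m0 I2a0 I2x2 hle sub HG Hg).
  rewrite opprB; apply: (@RS_main _ I2 m c x2 a0 (fun s => u (x1, s)) B (fun s => F x1 (mu (x1, s)).1) g cI2 mmin m0 I2x2 I2a0 _ sub HG Hg).
  by apply: ltW; rewrite ltNge hle.
split.
  exists ((u (x1, x2) - (x2 - x2) * B x2) - (u (x1, a0) - (a0 - x2) * B a0)); split.
    by apply: (gen x2).
  by rewrite ua0 Ba0 -/A; field.
exists ((u (x1, x2) - (x2 - 0) * B x2) - (u (x1, a0) - (a0 - 0) * B a0)); split.
  by apply: (gen 0) => s; rewrite subr0.
rewrite ua0 Ba0 -/A /B.
have := uw (x1, x2) (conj I1x1 I2x2); rewrite /= => ->; by field.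
Qed.
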